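(* Let $M_1,M_2$ be primitive monoids, $N_i$ an order-ideal of $M_i$ ($i=1,2$), and suppose $M_1/N_1\cong M_2/N_2\cong S$. Let $P$ be the pullback of the resulting maps $M_1\to S\leftarrow M_2$. Assume that $p\lhd q$ for all $p\in\mathbb P(N_i)$ and all $q\in\mathbb P(M_i)\setminus\mathbb P(N_i)$, $i=1,2$. Then $P$ is a primitive monoid, $P$ has an order-ideal $N\cong N_1\times N_2$ with $P/N\cong S$, and $\mathbb P(P)=\mathbb P(S)\sqcup\mathbb P(N_1)\sqcup\mathbb P(N_2)$, where the relation $\lhd$ on $\mathbb P(P)$ is given by the relations $\lhd$ of $S$, $N_1$ and $N_2$ on the respective pieces together with $p\lhd q$ for all $p\in\mathbb P(N_1)\sqcup\mathbb P(N_2)$ and $q\in\mathbb P(S)$.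
   Context: Monoids are abelian. A prime is $p$ with $p\not\le0$ and $p\le a+b\Rightarrow p\le a$ or $p\le b$ (algebraic preorder $x\le y$ iff $y=x+z$); a primitive monoid is a primely generated antisymmetric refinement monoid, and $\mathbb P(M)$ denotes its set of primes. For primes, $q\lhd p$ means $p+q=p$; a primitive monoid is determined up to isomorphism by $(\mathbb P(M),\lhd)$. An order-ideal is a nonempty $I$ with $x+y\in I\iff x,y\in I$; $M/I$ is the quotient by $x\equiv y\iff x+u=y+v$ for some $u,v\in I$, and $\mathbb P(N)=\mathbb P(M)\cap N$. The quotient $M/N$ of a primitive monoid is primitive with primes identified with $\mathbb P(M)\setminus\mathbb P(N)$. The pullback of $f_1\colon M_1\to S$, $f_2\colon M_2\to S$ is $\{(x,y)\in M_1\times M_2: f_1(x)=f_2(y)\}$. *)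

(* Defs.v *)
From Stdlib Require Import List ProofIrrelevance.
Set Implicit Arguments.

Record cmonoid := CMonoid {
  car :> Type;
  zero : car;
  add : car -> car -> car;
  addA : forall x y z, add (add x y) z = add x (add y z);
  addC : forall x y, add x y = add y x;
  add0 : forall x, add zero x = x
}.
Arguments zero {c}.
Arguments add {c} _ _.

Section Basics.
Variable M : cmonoid.

Definition le (x y : M) : Prop := exists z, y = add x z.

Definition prime (p : M) : Prop :=
  ~ le p zero /\ forall a b : M, le p (add a b) -> le p a \/ le p b.

Definition lhd (q p : M) : Prop := add p q = p.

Definition antisymmetric : Prop := forall x y : M, le x y -> le y x -> x = y.

Definition refinement : Prop :=
  forall a0 a1 b0 b1 : M, add a0 a1 = add b0 b1 ->
  exists c00 c01 c10 c11 : M,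
    a0 = add c00 c01 /\ a1 = add c10 c11 /\
    b0 = add c00 c10 /\ b1 = add c01 c11.

Definition sum_list (l : list M) : M := fold_right add zero l.

Definition primely_generated : Prop :=
  forall x : M, exists l : list M, Forall prime l /\ x = sum_list l.

Definition primitive : Prop :=
  primely_generated /\ antisymmetric /\ refinement.

Definition order_ideal (I : M -> Prop) : Prop :=
  (exists x, I x) /\ forall x y : M, I (add x y) <-> (I x /\ I y).

(** the congruence defining M/I *)
Definition ideal_cong (I : M -> Prop) (x y : M) : Prop :=
  exists u v : M, I u /\ I v /\ add x u = add y v.
End Basics.
Arguments le {M} x y.
Arguments prime {M} p.
Arguments lhd {M} q p.
Arguments order_ideal {M} I.
Arguments ideal_cong {M} I x y.
Arguments sum_list {M} l.

Definition is_hom (M S : cmonoid) (f : M -> S) : Prop :=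
  f zero = zero /\ forall x y, f (add x y) = add (f x) (f y).
Arguments is_hom {M S} f.

(** [g : M -> S] induces an isomorphism M/I ~= S: g is a surjective
    homomorphism whose kernel congruence is exactly the congruence of M/I. *)
Definition quotient_map (M S : cmonoid) (I : M -> Prop) (g : M -> S) : Prop :=
  is_hom g /\ (forall s : S, exists x, g x = s) /\
  forall x y, g x = g y <-> ideal_cong I x y.
Arguments quotient_map {M S} I g.

Definition prod_monoid (M1 M2 : cmonoid) : cmonoid.
Proof.
  refine (@CMonoid (M1 * M2) (zero, zero)
            (fun x y => (add (fst x) (fst y), add (snd x) (snd y))) _ _ _).
  - intros [a b] [c d] [e f]; simpl; now rewrite !addA.
  - intros [a b] [c d]; simpl; now rewrite (addC _ a), (addC _ b).
  - intros [a b]; simpl; now rewrite !add0.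
Defined.

Definition sub_iso (M M' : cmonoid) (A : M -> Prop) (B : M' -> Prop) (h : M -> M') : Prop :=
  (forall x, A x -> B (h x)) /\
  (forall y, B y -> exists x, A x /\ h x = y) /\
  (forall x y, A x -> A y -> h x = h y -> x = y) /\
  h zero = zero /\
  (forall x y, A x -> A y -> h (add x y) = add (h x) (h y)).
Arguments sub_iso {M M'} A B h.

Section Pullback.
Variables (M1 M2 S : cmonoid) (f1 : M1 -> S) (f2 : M2 -> S).
Hypotheses (hf1 : is_hom f1) (hf2 : is_hom f2).

Definition pb_car := { xy : M1 * M2 | f1 (fst xy) = f2 (snd xy) }.

Definition pb_zero : pb_car.
Proof.
  exists (zero, zero); simpl. destruct hf1 as [-> _]; destruct hf2 as [-> _]; reflexivity.
Defined.

Definition pb_add (x y : pb_car) : pb_car.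
Proof.
  destruct x as [[a b] hx], y as [[c d] hy].
  exists (add a c, add b d); simpl in *.
  destruct hf1 as [_ ->]; destruct hf2 as [_ ->]; now rewrite hx, hy.
Defined.

Definition pullback : cmonoid.
Proof.
  refine (@CMonoid pb_car pb_zero pb_add _ _ _).
  - intros [[a b] h1] [[c d] h2] [[u v] h3]; apply eq_sig_hprop;
      [intros; apply proof_irrelevance|]; simpl; now rewrite !addA.
  - intros [[a b] h1] [[c d] h2]; apply eq_sig_hprop;
      [intros; apply proof_irrelevance|]; simpl; now rewrite (addC _ a), (addC _ b).
  - intros [[a b] h1]; apply eq_sig_hprop;
      [intros; apply proof_irrelevance|]; simpl; now rewrite !add0.
Defined.
End Pullback.
Arguments pullback {M1 M2 S f1 f2} hf1 hf2.

Definition prime_pieces (S M1 M2 : cmonoid) (N1 : M1 -> Prop) (N2 : M2 -> Prop) : Type :=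
  ({ s : S | prime s } + ({ a : M1 | N1 a /\ prime a } + { b : M2 | N2 b /\ prime b }))%type.
Arguments prime_pieces S {M1 M2} N1 N2.

Definition glued_lhd (S M1 M2 : cmonoid) (N1 : M1 -> Prop) (N2 : M2 -> Prop)
  (x y : prime_pieces S N1 N2) : Prop :=
  match x, y with
  | inl s, inl t => lhd (proj1_sig s) (proj1_sig t)
  | inr (inl a), inr (inl b) => lhd (proj1_sig a) (proj1_sig b)
  | inr (inr a), inr (inr b) => lhd (proj1_sig a) (proj1_sig b)
  | inr _, inl _ => True
  | _, _ => False
  end.
Arguments glued_lhd {S M1 M2 N1 N2} x y.

(* Main.v *)
Require Import Defs.
From Stdlib Require Import List ProofIrrelevance Classical ClassicalEpsilon.
Set Implicit Arguments.

Lemma add0r (M : cmonoid) (x : M) : add x zero = x.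
Proof. rewrite addC. apply add0. Qed.

Lemma le_refl (M : cmonoid) (x : M) : le x x.
Proof. exists zero. now rewrite add0r. Qed.

Lemma le_0 (M : cmonoid) (x : M) : le zero x.
Proof. exists x. now rewrite add0. Qed.

Lemma le_addr (M : cmonoid) (x y : M) : le x (add x y).
Proof. now exists y. Qed.

Lemma prime_nz (M : cmonoid) (p : M) : prime p -> p <> zero.
Proof. intros [H _] ->. apply H, le_refl. Qed.

Lemma In_sum (M : cmonoid) (l : list M) q : In q l -> exists r, sum_list l = add q r.
Proof.
  induction l as [|a l IH]; simpl; [tauto|].
  intros [->|H]; [now exists (sum_list l)|].
  destruct (IH H) as [r Hr]. exists (add a r). rewrite Hr, <- !addA, (addC _ a q). reflexivity.
Qed.

Section Side.
Variables (M S : cmonoid) (N : M -> Prop) (f : M -> S).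
Hypotheses (hM : primitive M) (hN : order_ideal N) (hq : quotient_map N f)
  (hl : forall p q : M, prime p -> N p -> prime q -> ~ N q -> lhd p q).

Lemma N0 : N zero.
Proof. destruct hN as [[x hx] H]. apply (proj1 (H zero x)). now rewrite add0. Qed.

Lemma N_le x y : le x y -> N y -> N x.
Proof. intros [z ->] H. apply (proj2 hN) in H. tauto. Qed.

Lemma N_add x y : N x -> N y -> N (add x y).
Proof. intros. apply (proj2 hN). tauto. Qed.

Lemma f0 x : N x <-> f x = zero.
Proof.
  destruct hq as [[hz _] [_ hc]]. split.
  - intros H. rewrite <- hz. apply hc. exists zero, x. split; [apply N0|split; auto].
    now rewrite add0r, add0.
  - intros H. rewrite <- hz in H. apply hc in H. destruct H as [u [v [Hu [Hv E]]]].
    rewrite add0 in E. subst v. apply (proj2 hN) in Hv. tauto.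
Qed.

Lemma sum_N (l : list M) : N (sum_list l) -> Forall N l.
Proof.
  induction l as [|a l IH]; simpl; auto.
  intros H. apply (proj2 hN) in H. constructor; tauto.
Qed.

Lemma sum_notN (l : list M) : ~ N (sum_list l) -> exists q, In q l /\ ~ N q.
Proof.
  induction l as [|a l IH]; simpl.
  - intros H; exfalso; apply H, N0.
  - intros H. destruct (classic (N a)) as [Ha|Ha].
    + destruct IH as [q [Hq1 Hq2]]. { intro H'. apply H, N_add; auto. }
      exists q; auto.
    + exists a; auto.
Qed.

Lemma absorb x n : N n -> ~ N x -> add x n = x.
Proof.
  intros Hn Hx.
  destruct hM as [pg _].
  destruct (pg x) as [l [Hp ->]].
  destruct (sum_notN l Hx) as [q [Hq Hnq]].
  assert (Pq : prime q) by (rewrite Forall_forall in Hp; auto).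
  destruct (@In_sum _ l q Hq) as [r Hr]. rewrite Hr.
  destruct (pg n) as [l' [Hp' En]].
  assert (HN' : Forall N l') by (apply sum_N; now rewrite <- En).
  assert (E : add q n = q).
  { rewrite En. clear En Hn. induction l' as [|a l' IH]; simpl.
    - apply add0r.
    - inversion Hp'; inversion HN'; subst.
      rewrite <- addA. rewrite (hl H1 H5 Pq Hnq). auto. }
  rewrite addA, (addC _ r n), <- addA, E. reflexivity.
Qed.

Lemma finj x y : f x = f y -> ~ N x -> ~ N y -> x = y.
Proof.
  intros E Hx Hy. apply (proj2 (proj2 hq)) in E.
  destruct E as [u [v [Hu [Hv E]]]].
  rewrite (absorb Hu Hx), (absorb Hv Hy) in E. exact E.
Qed.
End Side.

Section Transfer.
Variables (X S : cmonoid) (N : X -> Prop) (g : X -> S).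
Hypotheses (hg : is_hom g) (hs : forall s : S, exists x, g x = s)
  (hNg : forall z, N z <-> g z = zero) (hNo : order_ideal N)
  (hinj : forall x y, g x = g y -> ~ N x -> ~ N y -> x = y).

Lemma le_hom x y : le x y -> le (g x) (g y).
Proof. intros [z ->]. exists (g z). apply (proj2 hg). Qed.

Lemma conical (s t : S) : add s t = zero -> s = zero.
Proof.
  intros E. destruct (hs s) as [u <-]. destruct (hs t) as [v <-].
  rewrite <- (proj2 hg) in E. apply hNg in E. apply hNg.
  apply (proj2 hNo) in E. tauto.
Qed.

Lemma prime_transfer z : ~ N z -> (prime z <-> prime (g z)).
Proof.
  intros Hz. split.
  - intros [H0 Hp]. split.
    + intros [t Et]. apply Hz, hNg. symmetry in Et. eapply conical; exact Et.
    + intros a b [t Et].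
      destruct (hs a) as [A <-]. destruct (hs b) as [B <-]. destruct (hs t) as [T <-].
      rewrite <- !(proj2 hg) in Et.
      assert (Hzt : ~ N (add z T)) by (intro H; apply (proj2 hNo) in H; tauto).
      assert (HAB : ~ N (add A B)).
      { intro H. apply hNg in H. rewrite Et in H. apply Hzt, hNg, H. }
      assert (E : add A B = add z T) by (apply hinj; auto).
      destruct (Hp A B) as [H|H]; [rewrite E; apply le_addr| |];
        [left|right]; apply le_hom in H; exact H.
  - intros [H0 Hp]. split.
    + intros [t Et]. apply H0. exists (g t). rewrite <- (proj2 hg), <- Et. symmetry; apply (proj1 hg).
    + intros a b [t Et]. apply (f_equal g) in Et; rewrite !(proj2 hg) in Et.
      assert (Hc : forall c, le (g z) (g c) -> le z c).
      { intros c [s Es]. destruct (hs s) as [T <-]. rewrite <- (proj2 hg) in Es.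
        assert (Hzt : ~ N (add z T)) by (intro H; apply (proj2 hNo) in H; tauto).
        assert (Hc : ~ N c) by (intro H; apply hNg in H; rewrite Es in H; apply Hzt, hNg, H).
        rewrite (hinj Es Hc Hzt). apply le_addr. }
      destruct (Hp (g a) (g b)) as [H|H]; [exists (g t); exact Et| |];
        [left|right]; apply Hc, H.
Qed.
End Transfer.

Section PB.
Variables (M1 M2 S : cmonoid) (N1 : M1 -> Prop) (N2 : M2 -> Prop)
  (f1 : M1 -> S) (f2 : M2 -> S).
Hypotheses (hM1 : primitive M1) (hM2 : primitive M2)
  (hN1 : order_ideal N1) (hN2 : order_ideal N2)
  (hf1 : is_hom f1) (hf2 : is_hom f2)
  (hq1 : quotient_map N1 f1) (hq2 : quotient_map N2 f2)
  (hlhd1 : forall p q : M1, prime p -> N1 p -> prime q -> ~ N1 q -> lhd p q)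
  (hlhd2 : forall p q : M2, prime p -> N2 p -> prime q -> ~ N2 q -> lhd p q).

Notation PB := (pullback hf1 hf2).

Definition pv (Z : PB) : M1 * M2 := proj1_sig Z.
Arguments pv : simpl never.

Lemma pv_prop (Z : PB) : f1 (fst (pv Z)) = f2 (snd (pv Z)).
Proof. exact (proj2_sig Z). Qed.

Lemma pv_inj (Z W : PB) : pv Z = pv W -> Z = W.
Proof.
  destruct Z as [z hz], W as [w hw]; unfold pv; simpl. intros ->.
  f_equal. apply proof_irrelevance.
Qed.

Lemma pv_add (Z W : PB) : pv (add Z W) =
  (add (fst (pv Z)) (fst (pv W)), add (snd (pv Z)) (snd (pv W))).
Proof. destruct Z as [[a b] hz], W as [[c d] hw]; reflexivity. Qed.

Lemma pv_zero : pv (zero : PB) = (zero, zero).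
Proof. reflexivity. Qed.

Definition mkP (x : M1) (y : M2) : PB :=
  match excluded_middle_informative (f1 x = f2 y) with
  | left h => exist _ (x, y) h
  | right _ => zero
  end.

Lemma mkP_val x y : f1 x = f2 y -> pv (mkP x y) = (x, y).
Proof.
  intros h. unfold mkP. destruct (excluded_middle_informative _); [reflexivity|contradiction].
Qed.

Lemma N1_0 : N1 zero. Proof. eapply N0; eauto. Qed.
Lemma N2_0 : N2 zero. Proof. eapply N0; eauto. Qed.
Lemma f1_0 x : N1 x <-> f1 x = zero. Proof. eapply f0; eauto. Qed.
Lemma f2_0 x : N2 x <-> f2 x = zero. Proof. eapply f0; eauto. Qed.
Lemma abs1 x n : N1 n -> ~ N1 x -> add x n = x. Proof. intros; eapply absorb; eauto. Qed.
Lemma abs2 x n : N2 n -> ~ N2 x -> add x n = x. Proof. intros; eapply absorb; eauto. Qed.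
Lemma inj1 x y : f1 x = f1 y -> ~ N1 x -> ~ N1 y -> x = y. Proof. intros; eapply finj; eauto. Qed.
Lemma inj2 x y : f2 x = f2 y -> ~ N2 x -> ~ N2 y -> x = y. Proof. intros; eapply finj; eauto. Qed.
Lemma N1_add x y : N1 (add x y) <-> N1 x /\ N1 y. Proof. apply (proj2 hN1). Qed.
Lemma N2_add x y : N2 (add x y) <-> N2 x /\ N2 y. Proof. apply (proj2 hN2). Qed.
Lemma N1_le x y : le x y -> N1 y -> N1 x. Proof. intros [z ->] H. apply N1_add in H; tauto. Qed.
Lemma N2_le x y : le x y -> N2 y -> N2 x. Proof. intros [z ->] H. apply N2_add in H; tauto. Qed.

Definition Nn (Z : PB) : Prop := N1 (fst (pv Z)) /\ N2 (snd (pv Z)).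
Definition gP (Z : PB) : S := f1 (fst (pv Z)).

Lemma Nn_fst Z : Nn Z <-> N1 (fst (pv Z)).
Proof.
  unfold Nn. split; [tauto|]. intros H. split; auto.
  apply f2_0. rewrite <- pv_prop. now apply f1_0.
Qed.

Lemma gP_hom : is_hom gP.
Proof.
  unfold gP. split.
  - rewrite pv_zero. apply (proj1 hf1).
  - intros. rewrite pv_add. apply (proj2 hf1).
Qed.

Lemma gP_surj : forall s : S, exists Z, gP Z = s.
Proof.
  intros s. destruct (proj1 (proj2 hq1) s) as [x hx].
  destruct (proj1 (proj2 hq2) s) as [y hy].
  exists (mkP x y). unfold gP. rewrite mkP_val; [exact hx|congruence].
Qed.

Lemma NgP Z : Nn Z <-> gP Z = zero.
Proof. rewrite Nn_fst. apply f1_0. Qed.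

Lemma Nn_oi : order_ideal Nn.
Proof.
  split.
  - exists zero. unfold Nn. rewrite pv_zero. split; [apply N1_0|apply N2_0].
  - intros Z W. unfold Nn. rewrite pv_add. simpl. rewrite N1_add, N2_add. tauto.
Qed.

Lemma gP_inj Z W : gP Z = gP W -> ~ Nn Z -> ~ Nn W -> Z = W.
Proof.
  rewrite !Nn_fst. unfold gP. intros E HZ HW.
  assert (E1 : fst (pv Z) = fst (pv W)) by (apply inj1; auto).
  assert (E2 : snd (pv Z) = snd (pv W)).
  { apply inj2; [rewrite <- !pv_prop; auto| |];
    intro H; apply f2_0 in H; rewrite <- pv_prop in H; apply f1_0 in H; auto. }
  apply pv_inj. destruct (pv Z), (pv W); simpl in *; congruence.
Qed.

Lemma absP Z W : Nn W -> ~ Nn Z -> add Z W = Z.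
Proof.
  intros HW HZ. apply pv_inj. rewrite pv_add.
  assert (H2 : ~ N2 (snd (pv Z))).
  { intro H. apply HZ. split; auto. apply f1_0. rewrite pv_prop. now apply f2_0. }
  assert (H1 : ~ N1 (fst (pv Z))) by (intro H; apply HZ, Nn_fst, H).
  destruct HW as [W1 W2]. rewrite (abs1 W1 H1), (abs2 W2 H2).
  destruct (pv Z); reflexivity.
Qed.


Lemma gP_qm : quotient_map Nn gP.
Proof.
  split; [apply gP_hom|split; [apply gP_surj|]]. intros Z W; split.
  - intro E. destruct (classic (Nn Z)) as [HZ|HZ], (classic (Nn W)) as [HW|HW].
    + exists W, Z. split; [exact HW|split; [exact HZ|apply addC]].
    + exfalso. apply HW, NgP. rewrite <- E. now apply NgP.
    + exfalso. apply HZ, NgP. rewrite E. now apply NgP.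
    + rewrite (gP_inj E HZ HW). exists zero, zero.
      assert (H0 : Nn zero) by (unfold Nn; rewrite pv_zero; split; [apply N1_0|apply N2_0]).
      split; [exact H0|split; [exact H0|reflexivity]].
  - intros [U [V [HU [HV E]]]]. apply (f_equal gP) in E. rewrite !(proj2 gP_hom) in E.
    apply NgP in HU. apply NgP in HV. rewrite HU, HV, !add0r in E. exact E.
Qed.

Lemma psi_iso : sub_iso Nn (fun z : prod_monoid M1 M2 => N1 (fst z) /\ N2 (snd z)) pv.
Proof.
  split; [|split; [|split; [|split]]].
  - intros x H. exact H.
  - intros [a b] [Ha Hb]. simpl in *. exists (mkP a b).
    assert (E : f1 a = f2 b) by (rewrite (proj1 (f1_0 a) Ha); symmetry; now apply f2_0).
    split; [unfold Nn; rewrite mkP_val by exact E; auto|apply mkP_val, E].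
  - intros x y _ _. apply pv_inj.
  - reflexivity.
  - intros x y _ _. rewrite pv_add. reflexivity.
Qed.

Lemma le_fst (Z W : PB) : le Z W -> le (fst (pv Z)) (fst (pv W)).
Proof. intros [U ->]. rewrite pv_add. simpl. apply le_addr. Qed.
Lemma le_snd (Z W : PB) : le Z W -> le (snd (pv Z)) (snd (pv W)).
Proof. intros [U ->]. rewrite pv_add. simpl. apply le_addr. Qed.

Lemma antiP : antisymmetric PB.
Proof.
  intros Z W H1 H2. apply pv_inj.
  rewrite (surjective_pairing (pv Z)), (surjective_pairing (pv W)). f_equal.
  - apply (proj1 (proj2 hM1)); apply le_fst; auto.
  - apply (proj1 (proj2 hM2)); apply le_snd; auto.
Qed.

Definition w2 (a : M1) : M2 :=
  proj1_sig (constructive_indefinite_description _ (proj1 (proj2 hq2) (f1 a))).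
Lemma w2_spec a : f2 (w2 a) = f1 a.
Proof. unfold w2. destruct constructive_indefinite_description; auto. Qed.
Definition w1 (b : M2) : M1 :=
  proj1_sig (constructive_indefinite_description _ (proj1 (proj2 hq1) (f2 b))).
Lemma w1_spec b : f1 (w1 b) = f2 b.
Proof. unfold w1. destruct constructive_indefinite_description; auto. Qed.

Definition lift1 (a : M1) : PB := mkP a (w2 a).
Definition lift2 (b : M2) : PB := mkP (w1 b) b.
Lemma lift1_fst a : fst (pv (lift1 a)) = a.
Proof. unfold lift1. rewrite mkP_val; [reflexivity|symmetry; apply w2_spec]. Qed.
Lemma lift2_snd b : snd (pv (lift2 b)) = b.
Proof. unfold lift2. rewrite mkP_val; [reflexivity|apply w1_spec]. Qed.

Lemma mkA_val a : N1 a -> pv (mkP a zero) = (a, zero).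
Proof. intros H. apply mkP_val. rewrite (proj1 (f1_0 a) H). symmetry; apply (proj1 hf2). Qed.
Lemma mkB_val b : N2 b -> pv (mkP zero b) = (zero, b).
Proof. intros H. apply mkP_val. rewrite (proj1 (f2_0 b) H). apply (proj1 hf1). Qed.
Lemma mkN_val a b : N1 a -> N2 b -> pv (mkP a b) = (a, b).
Proof. intros H1 H2. apply mkP_val. rewrite (proj1 (f1_0 a) H1), (proj1 (f2_0 b) H2). reflexivity. Qed.

Lemma Nn_add Z W : Nn (add Z W) <-> Nn Z /\ Nn W.
Proof. apply (proj2 Nn_oi). Qed.

Lemma primeA a : prime a -> N1 a -> prime (mkP a zero).
Proof.
  intros Pa Na. pose proof (mkA_val Na) as hA.
  assert (leA : forall X, le a (fst (pv X)) -> le (mkP a zero) X).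
  { intros X [z Ez]. destruct (classic (Nn X)) as [HX|HX].
    - assert (Nz : N1 z) by (apply (N1_le (y := fst (pv X))); [exists a; rewrite Ez; apply addC|apply HX]).
      exists (mkP z (snd (pv X))). apply pv_inj.
      rewrite pv_add, hA, mkN_val by (auto; apply HX). simpl.
      rewrite add0, <- Ez. apply surjective_pairing.
    - exists X. rewrite addC. symmetry. apply absP; auto.
      unfold Nn. rewrite hA. split; [exact Na|apply N2_0]. }
  split.
  - intros [W EW]. apply (f_equal pv) in EW. rewrite pv_add, pv_zero, hA in EW.
    injection EW as E1 _. apply (proj1 Pa). exists (fst (pv W)). exact E1.
  - intros X Y [W EW]. apply (f_equal pv) in EW. rewrite !pv_add, hA in EW.
    injection EW as E1 _.
    destruct (proj2 Pa (fst (pv X)) (fst (pv Y)) (ex_intro _ _ E1)) as [H|H];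
      [left|right]; apply leA, H.
Qed.

Lemma primeB b : prime b -> N2 b -> prime (mkP zero b).
Proof.
  intros Pb Nb. pose proof (mkB_val Nb) as hB.
  assert (leB : forall X, le b (snd (pv X)) -> le (mkP zero b) X).
  { intros X [z Ez]. destruct (classic (Nn X)) as [HX|HX].
    - assert (Nz : N2 z) by (apply (N2_le (y := snd (pv X))); [exists b; rewrite Ez; apply addC|apply HX]).
      exists (mkP (fst (pv X)) z). apply pv_inj.
      rewrite pv_add, hB, mkN_val by (auto; apply HX). simpl.
      rewrite add0, <- Ez. apply surjective_pairing.
    - exists X. rewrite addC. symmetry. apply absP; auto.
      unfold Nn. rewrite hB. split; [apply N1_0|exact Nb]. }
  split.
  - intros [W EW]. apply (f_equal pv) in EW. rewrite pv_add, pv_zero, hB in EW.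
    injection EW as _ E2. apply (proj1 Pb). exists (snd (pv W)). exact E2.
  - intros X Y [W EW]. apply (f_equal pv) in EW. rewrite !pv_add, hB in EW.
    injection EW as _ E2.
    destruct (proj2 Pb (snd (pv X)) (snd (pv Y)) (ex_intro _ _ E2)) as [H|H];
      [left|right]; apply leB, H.
Qed.

Lemma le_zero1 (x : M1) : le x zero -> x = zero.
Proof. intros H. apply (proj1 (proj2 hM1)); auto. apply le_0. Qed.
Lemma le_zero2 (x : M2) : le x zero -> x = zero.
Proof. intros H. apply (proj1 (proj2 hM2)); auto. apply le_0. Qed.

Lemma primeN Z : Nn Z -> prime Z ->
  (snd (pv Z) = zero /\ prime (fst (pv Z))) \/ (fst (pv Z) = zero /\ prime (snd (pv Z))).
Proof.
  intros [Nx Ny] PZ.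
  assert (EZ : Z = add (mkP (fst (pv Z)) zero) (mkP zero (snd (pv Z)))).
  { apply pv_inj. rewrite pv_add, mkA_val, mkB_val by auto. simpl.
    rewrite add0, add0r. apply surjective_pairing. }
  destruct (proj2 PZ (mkP (fst (pv Z)) zero) (mkP zero (snd (pv Z))))
    as [H|H]; [rewrite <- EZ; apply le_refl| |].
  - left. apply le_snd in H. rewrite mkA_val in H by auto. simpl in H.
    apply le_zero2 in H. split; auto.
    split.
    + intros [w Ew]. apply (proj1 PZ).
      assert (Nw : N1 w) by (apply (N1_le (y := zero)); [exists (fst (pv Z)); rewrite Ew; apply addC|apply N1_0]).
      exists (mkP w zero). apply pv_inj. rewrite pv_add, mkA_val, pv_zero by auto.
      simpl. rewrite H, <- Ew, add0. reflexivity.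
    + intros a b [z Ez].
      assert (HL : le Z (add (lift1 a) (lift1 b))).
      { destruct (classic (Nn (add (lift1 a) (lift1 b)))) as [HS|HS].
        - assert (HSa : fst (pv (add (lift1 a) (lift1 b))) = add a b)
            by (rewrite pv_add; simpl; now rewrite !lift1_fst).
          assert (Nz : N1 z).
          { apply (N1_le (y := add a b)). exists (fst (pv Z)). rewrite Ez; apply addC.
            rewrite <- HSa. apply HS. }
          exists (mkP z (snd (pv (add (lift1 a) (lift1 b))))). apply pv_inj.
          rewrite (pv_add Z), mkN_val by (auto; apply HS). simpl.
          rewrite H, add0, <- Ez, <- HSa. apply surjective_pairing.
        - exists (add (lift1 a) (lift1 b)). rewrite (addC _ Z). symmetry. apply absP; auto. split; auto. }
      destruct (proj2 PZ _ _ HL) as [H'|H']; [left|right]; apply le_fst in H';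
        rewrite lift1_fst in H'; exact H'.
  - right. apply le_fst in H. rewrite mkB_val in H by auto. simpl in H.
    apply le_zero1 in H. split; auto.
    split.
    + intros [w Ew]. apply (proj1 PZ).
      assert (Nw : N2 w) by (apply (N2_le (y := zero)); [exists (snd (pv Z)); rewrite Ew; apply addC|apply N2_0]).
      exists (mkP zero w). apply pv_inj. rewrite pv_add, mkB_val, pv_zero by auto.
      simpl. rewrite H, <- Ew, add0. reflexivity.
    + intros a b [z Ez].
      assert (HL : le Z (add (lift2 a) (lift2 b))).
      { destruct (classic (Nn (add (lift2 a) (lift2 b)))) as [HS|HS].
        - assert (HSa : snd (pv (add (lift2 a) (lift2 b))) = add a b)
            by (rewrite pv_add; simpl; now rewrite !lift2_snd).
          assert (Nz : N2 z).
          { apply (N2_le (y := add a b)). exists (snd (pv Z)). rewrite Ez; apply addC.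
            rewrite <- HSa. apply HS. }
          exists (mkP (fst (pv (add (lift2 a) (lift2 b)))) z). apply pv_inj.
          rewrite (pv_add Z), mkN_val by (auto; apply HS). simpl.
          rewrite H, add0, <- Ez, <- HSa. apply surjective_pairing.
        - exists (add (lift2 a) (lift2 b)). rewrite (addC _ Z). symmetry. apply absP; auto. split; auto. }
      destruct (proj2 PZ _ _ HL) as [H'|H']; [left|right]; apply le_snd in H';
        rewrite lift2_snd in H'; exact H'.
Qed.


Lemma primeS Z : ~ Nn Z -> (prime Z <-> prime (gP Z)).
Proof.
  intros H. eapply prime_transfer; eauto.
  - apply gP_hom.
  - apply gP_surj.
  - apply NgP.
  - apply Nn_oi.
  - apply gP_inj.
Qed.

Lemma primeM1 x : ~ N1 x -> (prime x <-> prime (f1 x)).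
Proof.
  intros H. eapply prime_transfer; eauto.
  - apply (proj1 (proj2 hq1)).
  - apply f1_0.
  - apply inj1.
Qed.

Definition liftp (a : M1) : PB :=
  if excluded_middle_informative (N1 a) then mkP a zero else lift1 a.

Lemma liftp_fst a : fst (pv (liftp a)) = a.
Proof.
  unfold liftp. destruct excluded_middle_informative.
  - rewrite mkA_val; auto.
  - apply lift1_fst.
Qed.

Lemma liftp_N a : N1 a -> pv (liftp a) = (a, zero).
Proof.
  intros H. unfold liftp. destruct excluded_middle_informative; [|contradiction].
  apply mkA_val; auto.
Qed.

Lemma liftp_prime a : prime a -> prime (liftp a).
Proof.
  intros Pa. unfold liftp. destruct excluded_middle_informative as [H|H].
  - apply primeA; auto.
  - assert (HN : ~ Nn (lift1 a)) by (rewrite Nn_fst, lift1_fst; auto).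
    apply primeS; auto. unfold gP. rewrite lift1_fst. apply primeM1; auto.
Qed.

Lemma sum_app (M : cmonoid) (l1 l2 : list M) :
  sum_list (l1 ++ l2) = add (sum_list l1) (sum_list l2).
Proof.
  induction l1; simpl. now rewrite add0. now rewrite IHl1, addA.
Qed.

Lemma sum_cons (M : cmonoid) (a : M) l : sum_list (a :: l) = add a (sum_list l).
Proof. reflexivity. Qed.

Lemma fst_sum (L : list PB) : fst (pv (sum_list L)) = sum_list (map (fun Z => fst (pv Z)) L).
Proof. induction L. reflexivity. cbn [map]. rewrite !sum_cons, pv_add; simpl. now rewrite IHL. Qed.

Lemma sumA l : Forall N1 l -> pv (sum_list (map (fun a => mkP a zero) l)) = (sum_list l, zero).
Proof.
  induction l; intros H. reflexivity.
  cbn [map]. rewrite !sum_cons.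
  inversion H; subst. rewrite pv_add, IHl, mkA_val by auto. simpl. now rewrite add0.
Qed.
Lemma sumB l : Forall N2 l -> pv (sum_list (map (fun b => mkP zero b) l)) = (zero, sum_list l).
Proof.
  induction l; intros H. reflexivity.
  cbn [map]. rewrite !sum_cons.
  inversion H; subst. rewrite pv_add, IHl, mkB_val by auto. simpl. now rewrite add0.
Qed.

Lemma Forall_le (M : cmonoid) (N : M -> Prop) (l : list M) :
  (forall x y, le x y -> N y -> N x) -> N (sum_list l) -> Forall N l.
Proof.
  intros Hle H. apply Forall_forall. intros x Hx.
  destruct (@In_sum _ l x Hx) as [r Hr]. apply (Hle x (sum_list l)); auto.
  rewrite Hr. apply le_addr.
Qed.

Lemma pgP : primely_generated PB.
Proof.
  intros Z. destruct (proj1 hM1 (fst (pv Z))) as [l1 [P1 E1]].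
  destruct (classic (Nn Z)) as [HZ|HZ].
  - destruct (proj1 hM2 (snd (pv Z))) as [l2 [P2 E2]].
    assert (F1 : Forall N1 l1) by (apply Forall_le; [apply N1_le|rewrite <- E1; apply HZ]).
    assert (F2 : Forall N2 l2) by (apply Forall_le; [apply N2_le|rewrite <- E2; apply HZ]).
    exists (map (fun a => mkP a zero) l1 ++ map (fun b => mkP zero b) l2). split.
    + apply Forall_app. split; apply Forall_forall; intros x Hx; apply in_map_iff in Hx;
        destruct Hx as [y [<- Hy]]; rewrite Forall_forall in *.
      * apply primeA; auto.
      * apply primeB; auto.
    + apply pv_inj. rewrite sum_app, pv_add, sumA, sumB by auto. simpl.
      rewrite add0r, add0, <- E1, <- E2. apply surjective_pairing.
  - exists (map liftp l1). split.
    + apply Forall_forall; intros x Hx; apply in_map_iff in Hx;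
        destruct Hx as [y [<- Hy]]; rewrite Forall_forall in *. apply liftp_prime; auto.
    + assert (Ef : fst (pv (sum_list (map liftp l1))) = fst (pv Z)).
      { rewrite fst_sum, map_map, E1. f_equal. transitivity (map (fun x => x) l1).
        apply map_ext. apply liftp_fst. apply map_id. }
      apply gP_inj; auto.
      * unfold gP. now rewrite Ef.
      * rewrite Nn_fst, Ef. rewrite Nn_fst in HZ. exact HZ.
Qed.

Lemma eq_fst (X Y : PB) : ~ Nn X -> fst (pv X) = fst (pv Y) -> X = Y.
Proof.
  intros HX E. apply gP_inj; auto.
  - unfold gP. now rewrite E.
  - rewrite Nn_fst, <- E. rewrite Nn_fst in HX. exact HX.
Qed.

Lemma refine_core (A0 A1 B0 B1 : PB) : ~ Nn A0 -> ~ Nn B0 -> add A0 A1 = add B0 B1 ->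
  exists C00 C01 C10 C11 : PB,
    A0 = add C00 C01 /\ A1 = add C10 C11 /\ B0 = add C00 C10 /\ B1 = add C01 C11.
Proof.
  intros HA0 HB0 E.
  assert (E1 := f_equal (fun Z => fst (pv Z)) E). cbv beta in E1. rewrite !pv_add in E1. simpl in E1.
  destruct (proj2 (proj2 hM1) _ _ _ _ E1) as [c00 [c01 [c10 [c11 [Ea0 [Ea1 [Eb0 Eb1]]]]]]].
  assert (HC : forall (c : M1) (B : PB), le c (fst (pv B)) ->
            exists C, fst (pv C) = c /\ (Nn B -> pv C = (c, snd (pv B)))).
  { intros c B Hc. destruct (classic (Nn B)) as [h|h].
    - exists (mkP c (snd (pv B))).
      assert (V : pv (mkP c (snd (pv B))) = (c, snd (pv B)))
        by (apply mkN_val; [apply (N1_le Hc), h|apply h]).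
      rewrite V. split; auto.
    - exists (liftp c). split; [apply liftp_fst|contradiction]. }
  destruct (HC c01 B1) as [C01 [F01 G01]]; [rewrite Eb1; apply le_addr|].
  destruct (HC c10 A1) as [C10 [F10 G10]]; [rewrite Ea1; apply le_addr|].
  exists (liftp c00), C01, C10, (liftp c11). split; [|split; [|split]].
  - apply eq_fst; auto. rewrite pv_add; simpl. now rewrite liftp_fst, F01.
  - destruct (classic (Nn A1)) as [h|h].
    + assert (N11 : N1 c11) by (apply (N1_le (y := fst (pv A1))); [rewrite Ea1, addC; apply le_addr|apply h]).
      apply pv_inj. rewrite pv_add, G10, liftp_N by auto. simpl. rewrite add0r, <- Ea1. apply surjective_pairing.
    + apply eq_fst; auto. rewrite pv_add; simpl. now rewrite liftp_fst, F10.
  - apply eq_fst; auto. rewrite pv_add; simpl. now rewrite liftp_fst, F10.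
  - destruct (classic (Nn B1)) as [h|h].
    + assert (N11 : N1 c11) by (apply (N1_le (y := fst (pv B1))); [rewrite Eb1, addC; apply le_addr|apply h]).
      apply pv_inj. rewrite pv_add, G01, liftp_N by auto. simpl. rewrite add0r, <- Eb1. apply surjective_pairing.
    + apply eq_fst; auto. rewrite pv_add; simpl. now rewrite liftp_fst, F01.
Qed.

Ltac solve_eq Ea Fa := apply pv_inj; rewrite pv_add, !mkN_val by assumption; simpl;
  rewrite <- Ea, <- Fa; apply surjective_pairing.

Lemma refP : refinement PB.
Proof.
  intros A0 A1 B0 B1 E.
  destruct (classic (Nn A0 /\ Nn A1)) as [[h0 h1]|h].
  - assert (hB : Nn B0 /\ Nn B1) by (apply Nn_add; rewrite <- E; apply Nn_add; auto).
    destruct hB as [k0 k1].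
    assert (E1 := f_equal (fun Z => fst (pv Z)) E). cbv beta in E1. rewrite !pv_add in E1. simpl in E1.
    assert (E2 := f_equal (fun Z => snd (pv Z)) E). cbv beta in E2. rewrite !pv_add in E2. simpl in E2.
    destruct (proj2 (proj2 hM1) _ _ _ _ E1) as [c00 [c01 [c10 [c11 [Ea0 [Ea1 [Eb0 Eb1]]]]]]].
    destruct (proj2 (proj2 hM2) _ _ _ _ E2) as [d00 [d01 [d10 [d11 [Fa0 [Fa1 [Fb0 Fb1]]]]]]].
    destruct h0 as [h0 h0'], h1 as [h1 h1'].
    assert (n00 : N1 c00) by (apply (N1_le (y := fst (pv A0))); [rewrite Ea0; apply le_addr|auto]).
    assert (n01 : N1 c01) by (apply (N1_le (y := fst (pv A0))); [rewrite Ea0, addC; apply le_addr|auto]).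
    assert (n10 : N1 c10) by (apply (N1_le (y := fst (pv A1))); [rewrite Ea1; apply le_addr|auto]).
    assert (n11 : N1 c11) by (apply (N1_le (y := fst (pv A1))); [rewrite Ea1, addC; apply le_addr|auto]).
    assert (m00 : N2 d00) by (apply (N2_le (y := snd (pv A0))); [rewrite Fa0; apply le_addr|auto]).
    assert (m01 : N2 d01) by (apply (N2_le (y := snd (pv A0))); [rewrite Fa0, addC; apply le_addr|auto]).
    assert (m10 : N2 d10) by (apply (N2_le (y := snd (pv A1))); [rewrite Fa1; apply le_addr|auto]).
    assert (m11 : N2 d11) by (apply (N2_le (y := snd (pv A1))); [rewrite Fa1, addC; apply le_addr|auto]).
    exists (mkP c00 d00), (mkP c01 d01), (mkP c10 d10), (mkP c11 d11).
    split; [solve_eq Ea0 Fa0|split; [solve_eq Ea1 Fa1|split; [solve_eq Eb0 Fb0|solve_eq Eb1 Fb1]]].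
  - assert (hB : ~ (Nn B0 /\ Nn B1)).
    { intros hB. apply h, Nn_add. rewrite E. apply Nn_add, hB. }
    apply not_and_or in h. apply not_and_or in hB.
    destruct h as [h|h], hB as [k|k].
    + apply refine_core; auto.
    + rewrite (addC _ B0) in E.
      destruct (@refine_core A0 A1 B1 B0 h k E) as [C00 [C01 [C10 [C11 [X1 [X2 [X3 X4]]]]]]].
      exists C01, C00, C11, C10. rewrite X1, X2, X3, X4, !(addC _ C01), !(addC _ C11).
      rewrite (addC _ C00 C10). repeat split; try reflexivity; try apply addC.
    + rewrite (addC _ A0) in E.
      destruct (@refine_core A1 A0 B0 B1 h k E) as [C00 [C01 [C10 [C11 [X1 [X2 [X3 X4]]]]]]].
      exists C10, C11, C00, C01. rewrite X1, X2, X3, X4. rewrite (addC _ C10 C00).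
      rewrite (addC _ C11 C01). repeat split; try reflexivity; try apply addC.
    + rewrite (addC _ A0), (addC _ B0) in E.
      destruct (@refine_core A1 A0 B1 B0 h k E) as [C00 [C01 [C10 [C11 [X1 [X2 [X3 X4]]]]]]].
      exists C11, C10, C01, C00. rewrite X1, X2, X3, X4.
      rewrite !(addC _ C11), !(addC _ C01). repeat split; try reflexivity; try apply addC.
Qed.

Lemma primP : primitive PB.
Proof. split; [apply pgP|split; [apply antiP|apply refP]]. Qed.


Definition PP := {p : PB | prime p}.

Lemma phiS_pf (p : PP) : ~ Nn (proj1_sig p) -> prime (gP (proj1_sig p)).
Proof. intros h. apply primeS; auto. exact (proj2_sig p). Qed.

Lemma phiA_pf (p : PP) : Nn (proj1_sig p) -> snd (pv (proj1_sig p)) = zero ->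
  N1 (fst (pv (proj1_sig p))) /\ prime (fst (pv (proj1_sig p))).
Proof.
  intros h h2. destruct (primeN h (proj2_sig p)) as [[_ H]|[_ H]].
  - split; auto. apply h.
  - rewrite h2 in H. exfalso. apply (prime_nz H). reflexivity.
Qed.

Lemma phiB_pf (p : PP) : Nn (proj1_sig p) -> snd (pv (proj1_sig p)) <> zero ->
  N2 (snd (pv (proj1_sig p))) /\ prime (snd (pv (proj1_sig p))).
Proof.
  intros h h2. destruct (primeN h (proj2_sig p)) as [[H _]|[_ H]].
  - contradiction.
  - split; auto. apply h.
Qed.

Lemma phiB_fst (p : PP) : Nn (proj1_sig p) -> snd (pv (proj1_sig p)) <> zero ->
  fst (pv (proj1_sig p)) = zero.
Proof.
  intros h h2. destruct (primeN h (proj2_sig p)) as [[H _]|[H _]]; [contradiction|exact H].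
Qed.

Definition phi (p : PP) : prime_pieces S N1 N2 :=
  match excluded_middle_informative (Nn (proj1_sig p)) with
  | right h => inl (exist _ (gP (proj1_sig p)) (phiS_pf p h))
  | left h =>
    match excluded_middle_informative (snd (pv (proj1_sig p)) = zero) with
    | left h2 => inr (inl (exist _ (fst (pv (proj1_sig p))) (phiA_pf p h h2)))
    | right h2 => inr (inr (exist _ (snd (pv (proj1_sig p))) (phiB_pf p h h2)))
    end
  end.

Definition pick (s : S) : PB := proj1_sig (constructive_indefinite_description _ (gP_surj s)).
Lemma pick_spec s : gP (pick s) = s.
Proof. unfold pick. destruct constructive_indefinite_description; auto. Qed.

Lemma pick_notN (s : {s : S | prime s}) : ~ Nn (pick (proj1_sig s)).
Proof.
  intros H. apply NgP in H. rewrite pick_spec in H. apply (prime_nz (proj2_sig s) H).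
Qed.

Lemma pick_prime (s : {s : S | prime s}) : prime (pick (proj1_sig s)).
Proof. apply primeS. apply pick_notN. rewrite pick_spec. exact (proj2_sig s). Qed.

Lemma invA_pf (a : {a : M1 | N1 a /\ prime a}) : prime (mkP (proj1_sig a) zero).
Proof. destruct a as [a [h1 h2]]; simpl. apply primeA; auto. Qed.
Lemma invB_pf (b : {b : M2 | N2 b /\ prime b}) : prime (mkP zero (proj1_sig b)).
Proof. destruct b as [b [h1 h2]]; simpl. apply primeB; auto. Qed.

Definition phi_inv (x : prime_pieces S N1 N2) : PP :=
  match x with
  | inl s => exist _ (pick (proj1_sig s)) (pick_prime s)
  | inr (inl a) => exist _ (mkP (proj1_sig a) zero) (invA_pf a)
  | inr (inr b) => exist _ (mkP zero (proj1_sig b)) (invB_pf b)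
  end.

Lemma sig_eq (A : Type) (P : A -> Prop) (x y : {a : A | P a}) :
  proj1_sig x = proj1_sig y -> x = y.
Proof. intros. apply eq_sig_hprop; auto. intros; apply proof_irrelevance. Qed.

Lemma phi_spec (p : PP) : match phi p with
               | inl s => ~ Nn (proj1_sig p) /\ gP (proj1_sig p) = proj1_sig s
               | inr (inl a) => Nn (proj1_sig p) /\
                                pv (proj1_sig p) = (proj1_sig a, zero)
               | inr (inr b) => Nn (proj1_sig p) /\
                                pv (proj1_sig p) = (zero, proj1_sig b)
               end.
Proof.
  unfold phi. destruct (excluded_middle_informative (Nn (proj1_sig p))) as [h|h].
  - destruct (excluded_middle_informative (snd (pv (proj1_sig p)) = zero)) as [h2|h2]; simpl.
    + split; auto. rewrite <- h2. apply surjective_pairing.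
    + split; auto. rewrite <- (phiB_fst p h h2). apply surjective_pairing.
  - simpl. auto.
Qed.

Lemma phi_inv_l p : phi_inv (phi p) = p.
Proof.
  pose proof (phi_spec p) as H. destruct (phi p) as [s|[a|b]]; simpl in *; apply sig_eq; simpl.
  - destruct H as [H1 H2]. apply gP_inj; auto.
    + rewrite pick_spec. auto.
    + apply pick_notN.
  - destruct H as [H1 H2]. apply pv_inj. rewrite H2. apply mkA_val.
    exact (proj1 (proj2_sig a)).
  - destruct H as [H1 H2]. apply pv_inj. rewrite H2. apply mkB_val.
    exact (proj1 (proj2_sig b)).
Qed.

Lemma phi_inv_r x : phi (phi_inv x) = x.
Proof.
  destruct x as [s|[a|b]]; unfold phi; simpl.
  - destruct excluded_middle_informative as [h|h].
    + exfalso. apply (pick_notN s h).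
    + f_equal. apply sig_eq. simpl. apply pick_spec.
  - destruct a as [a [ha pa]]; simpl.
    assert (V : pv (mkP a zero) = (a, zero)) by (apply mkA_val; auto).
    destruct excluded_middle_informative as [h|h].
    + destruct excluded_middle_informative as [h2|h2].
      * do 2 f_equal. apply sig_eq. simpl. rewrite V. reflexivity.
      * exfalso. apply h2. rewrite V. reflexivity.
    + exfalso. apply h. unfold Nn. rewrite V. split; [exact ha|apply N2_0].
  - destruct b as [b [hb pb]]; simpl.
    assert (V : pv (mkP zero b) = (zero, b)) by (apply mkB_val; auto).
    destruct excluded_middle_informative as [h|h].
    + destruct excluded_middle_informative as [h2|h2].
      * exfalso. rewrite V in h2. apply (prime_nz pb h2).
      * do 2 f_equal. apply sig_eq. simpl. rewrite V. reflexivity.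
    + exfalso. apply h. unfold Nn. rewrite V. split; [apply N1_0|exact hb].
Qed.


Lemma lhd_glued (p q : PP) :
  lhd (proj1_sig q) (proj1_sig p) <-> glued_lhd (phi q) (phi p).
Proof.
  pose proof (phi_spec p) as Hp. pose proof (phi_spec q) as Hq.
  unfold lhd. destruct (phi q) as [t|[a'|b']], (phi p) as [s|[a|b]]; unfold glued_lhd; cbv beta iota;
    destruct Hp as [Np Vp], Hq as [Nq Vq].
  - split.
    + intros E. apply (f_equal gP) in E. rewrite (proj2 gP_hom), Vp, Vq in E. exact E.
    + intros E. apply gP_inj; auto.
      * rewrite (proj2 gP_hom), Vp, Vq. exact E.
      * intros H. apply Nn_add in H. tauto.
  - split; [|tauto]. intros E. apply Nq. rewrite <- E in Np. apply Nn_add in Np. tauto.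
  - split; [|tauto]. intros E. apply Nq. rewrite <- E in Np. apply Nn_add in Np. tauto.
  - split; auto. intros _. apply absP; auto.
  - split.
    + intros E. apply (f_equal pv) in E. rewrite pv_add, Vp, Vq in E. injection E as E _. exact E.
    + intros E. apply pv_inj. rewrite pv_add, Vp, Vq. simpl. rewrite E, add0r. reflexivity.
  - split; [|tauto]. intros E. apply (f_equal pv) in E. rewrite pv_add, Vp, Vq in E.
    injection E as E. rewrite add0 in E. apply (prime_nz (proj2 (proj2_sig a')) E).
  - split; auto. intros _. apply absP; auto.
  - split; [|tauto]. intros E. apply (f_equal pv) in E. rewrite pv_add, Vp, Vq in E.
    injection E as _ E. rewrite add0 in E. apply (prime_nz (proj2 (proj2_sig b')) E).
  - split.
    + intros E. apply (f_equal pv) in E. rewrite pv_add, Vp, Vq in E. injection E as _ E. exact E.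
    + intros E. apply pv_inj. rewrite pv_add, Vp, Vq. simpl. rewrite E, add0r. reflexivity.
Qed.

Lemma main_sec :
  primitive (pullback hf1 hf2) /\
  exists (N : pullback hf1 hf2 -> Prop) (g : pullback hf1 hf2 -> S)
         (psi : pullback hf1 hf2 -> prod_monoid M1 M2)
         (phi : { p : pullback hf1 hf2 | prime p } -> prime_pieces S N1 N2),
    order_ideal N /\
    sub_iso N (fun z : prod_monoid M1 M2 => N1 (fst z) /\ N2 (snd z)) psi /\
    quotient_map N g /\
    (exists phi_inv : prime_pieces S N1 N2 -> { p : pullback hf1 hf2 | prime p },
        (forall p, phi_inv (phi p) = p) /\ (forall x, phi (phi_inv x) = x)) /\
    (forall p, match phi p with
               | inl s => ~ N (proj1_sig p) /\ g (proj1_sig p) = proj1_sig s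
               | inr (inl a) => N (proj1_sig p) /\
                                psi (proj1_sig p) = (proj1_sig a, zero)
               | inr (inr b) => N (proj1_sig p) /\
                                psi (proj1_sig p) = (zero, proj1_sig b)
               end) /\
    (forall p q, lhd (proj1_sig q) (proj1_sig p) <-> glued_lhd (phi q) (phi p)).
Proof.
  split; [apply primP|].
  exists Nn, gP, pv, phi.
  split; [apply Nn_oi|]. split; [apply psi_iso|]. split; [apply gP_qm|].
  split; [exists phi_inv; split; [apply phi_inv_l|apply phi_inv_r]|].
  split; [apply phi_spec|apply lhd_glued].
Qed.

End PB.

Theorem mainTheorem12
  (M1 M2 S : cmonoid) (N1 : M1 -> Prop) (N2 : M2 -> Prop)
  (f1 : M1 -> S) (f2 : M2 -> S)
  (hM1 : primitive M1) (hM2 : primitive M2)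
  (hN1 : order_ideal N1) (hN2 : order_ideal N2)
  (hf1 : is_hom f1) (hf2 : is_hom f2)
  (hq1 : quotient_map N1 f1) (hq2 : quotient_map N2 f2)
  (hlhd1 : forall p q : M1, prime p -> N1 p -> prime q -> ~ N1 q -> lhd p q)
  (hlhd2 : forall p q : M2, prime p -> N2 p -> prime q -> ~ N2 q -> lhd p q) :
  primitive (pullback hf1 hf2) /\
  exists (N : pullback hf1 hf2 -> Prop) (g : pullback hf1 hf2 -> S)
         (psi : pullback hf1 hf2 -> prod_monoid M1 M2)
         (phi : { p : pullback hf1 hf2 | prime p } -> prime_pieces S N1 N2),
    order_ideal N /\
    sub_iso N (fun z : prod_monoid M1 M2 => N1 (fst z) /\ N2 (snd z)) psi /\
    quotient_map N g /\
    (exists phi_inv : prime_pieces S N1 N2 -> { p : pullback hf1 hf2 | prime p },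
        (forall p, phi_inv (phi p) = p) /\ (forall x, phi (phi_inv x) = x)) /\
    (forall p, match phi p with
               | inl s => ~ N (proj1_sig p) /\ g (proj1_sig p) = proj1_sig s
               | inr (inl a) => N (proj1_sig p) /\
                                psi (proj1_sig p) = (proj1_sig a, zero)
               | inr (inr b) => N (proj1_sig p) /\
                                psi (proj1_sig p) = (zero, proj1_sig b)
               end) /\
    (forall p q, lhd (proj1_sig q) (proj1_sig p) <-> glued_lhd (phi q) (phi p)).
Proof.
  eapply main_sec; eassumption.
Qed.
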